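(* Let $V$ be a countable dimensional vector space with a fixed basis $E$. On the set of generalized flags in $V$ that are weakly compatible with $E$, the relation of $E$-commensurability is an equivalence relation. Moreover, in the definition of $E$-commensurability, condition (ii) may equivalently be replaced by (ii$'$): $\dim(F/(F\cap\varphi(F)))=\dim(\varphi(F)/(F\cap\varphi(F)))$ for every $F\in\mathcal{F}$.
   Context: $k$ is a field of characteristic $0$. A chain of subspaces is a set of pairwise distinct subspaces totally ordered by inclusion; $\mathcal{C}'$ (resp. $\mathcal{C}''$) denotes elements with an immediate successor (resp. predecessor), $F^+$ the immediate successor of $F\in\mathcal{C}'$. A generalized flag is a chain $\mathcal{F}$ with $\mathcal{F}=\mathcal{F}'\cup\mathcal{F}''$ and $V\setminus\{0\}=\bigcup_{F\in\mathcal{F}'}(F^+\setminus F)$; for $v\ne0$, $F'_v$ is the unique $F\in\mathcal{F}'$ with $v\in F^+\setminus F$. For a chain $\mathcal{C}$, $[v]_\mathcal{C}:=\{u:\forall C\in\mathcal{C},\ u\in C\iff v\in C\}$ and $fl(\mathcal{C})$ is the unique generalized flag inducing the same partition. A basis $\{e_\alpha\}_{\alpha\in A}$ is compatible with $\mathcal{F}$ if there is a strict partial order $\prec$ on $A$ (incomparability being an equivalence relation) with $F'_{e_\alpha}=\mathrm{span}\{e_\beta:\beta\prec\alpha\}$ and $\mathcal{F}=fl(\{F'_{e_\alpha}\})$. A generalized flag $\mathcal{F}$ is weakly compatible with $E$ if it is compatible with some basis $L$ of $V$ such that $E\setminus(E\cap L)$ is finite. Two generalized flags $\mathcal{F},\mathcal{G}$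 are $E$-commensurable if both are weakly compatible with $E$ and there exist an inclusion-preserving bijection $\varphi:\mathcal{F}\to\mathcal{G}$ and a finite dimensional subspace $U\subset V$ such that for every $F\in\mathcal{F}$: (i) $F\subset\varphi(F)+U$ and $\varphi(F)\subset F+U$; (ii) $\dim(F\cap U)=\dim(\varphi(F)\cap U)$. *)

(* Defs.v *)
From HB Require Import structures.
From mathcomp Require Import all_boot all_order all_algebra.
From mathcomp Require Import boolp classical_sets cardinality.
Set Implicit Arguments. Unset Strict Implicit. Unset Printing Implicit Defensive.
Import GRing.Theory.
Local Open Scope classical_set_scope.
Local Open Scope ring_scope.

Section Defs.
Variables (k : fieldType) (V : lmodType k).

Definition span (A : set V) : set V :=
  [set v | exists n (f : 'I_n -> V) (c : 'I_n -> k),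
      (forall i, A (f i)) /\ v = \sum_(i < n) c i *: f i].

Definition subspace (S : set V) : Prop :=
  S 0 /\ forall (a : k) x y, S x -> S y -> S (a *: x + y).

Definition ssum (A B : set V) : set V :=
  [set x | exists a b, A a /\ B b /\ x = a + b].

Definition lin_indep (L : set V) : Prop :=
  forall n (f : 'I_n -> V) (c : 'I_n -> k), injective f ->
    (forall i, L (f i)) -> \sum_(i < n) c i *: f i = 0 -> forall i, c i = 0.

Definition is_basis (L : set V) : Prop := lin_indep L /\ span L = setT.

Definition fin_dim (U : set V) : Prop :=
  exists n (f : 'I_n -> V), U = span (range f).

(* quot_dim A B n : B is a subspace of A and dim (A / B) = n
   (n vectors of A, linearly independent modulo B, spanning A modulo B) *)
Definition quot_dim (A B : set V) (n : nat) : Prop :=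
  B `<=` A /\
  exists f : 'I_n -> V, (forall i, A (f i)) /\
    (forall c : 'I_n -> k, B (\sum_(i < n) c i *: f i) -> forall i, c i = 0) /\
    A `<=` ssum B (span (range f)).

Definition dim_is (S : set V) (n : nat) : Prop := quot_dim S [set 0] n.

(* chain of subspaces (a set of subspaces, hence pairwise distinct) *)
Definition chain (C : set (set V)) : Prop :=
  (forall S, C S -> subspace S) /\
  (forall S T, C S -> C T -> S `<=` T \/ T `<=` S).

Definition isSucc (C : set (set V)) (F G : set V) : Prop :=
  C F /\ C G /\ F `<` G /\
  (forall H, C H -> F `<=` H -> H `<=` G -> H = F \/ H = G).

Definition gen_flag (C : set (set V)) : Prop :=
  chain C /\
  (forall F, C F -> (exists G, isSucc C F G) \/ (exists G, isSucc C G F)) /\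
  (forall v, v <> 0 <-> exists F G, isSucc C F G /\ G v /\ ~ F v).

Definition Fprime (C : set (set V)) (v : V) (F : set V) : Prop :=
  exists G, isSucc C F G /\ G v /\ ~ F v.

Definition cls (C : set (set V)) (v : V) : set V :=
  [set u | forall S, C S -> (S u <-> S v)].

Definition same_partition (C D : set (set V)) : Prop :=
  forall v, cls C v = cls D v.

(* the basis L (indexed by itself) is compatible with the generalized flag F;
   "F = fl(C)" is expressed as "F (a generalized flag) induces the same
   partition as C" *)
Definition compatible (F : set (set V)) (L : set V) : Prop :=
  is_basis L /\
  exists lt : V -> V -> Prop,
    (forall a, L a -> ~ lt a a) /\
    (forall a b c, L a -> L b -> L c -> lt a b -> lt b c -> lt a c) /\
    (let incomp a b := ~ lt a b /\ ~ lt b a in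
     forall a b c, L a -> L b -> L c -> incomp a b -> incomp b c -> incomp a c) /\
    (forall a, L a -> Fprime F a (span [set b | L b /\ lt b a])) /\
    same_partition F [set S | exists a, L a /\ Fprime F a S].

Definition weakly_compatible (E : set V) (F : set (set V)) : Prop :=
  gen_flag F /\ exists L, compatible F L /\ finite_set (E `\` L).

Definition commens_with (cond : set V -> set V -> set V -> Prop)
    (E : set V) (F G : set (set V)) : Prop :=
  weakly_compatible E F /\ weakly_compatible E G /\
  exists (phi : set V -> set V) (U : set V),
    (forall S, F S -> G (phi S)) /\
    (forall S T, F S -> F T -> phi S = phi T -> S = T) /\
    (forall T, G T -> exists S, F S /\ phi S = T) /\
    (forall S T, F S -> F T -> S `<=` T -> phi S `<=` phi T) /\
    fin_dim U /\
    (forall S, F S ->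
       S `<=` ssum (phi S) U /\ phi S `<=` ssum S U /\ cond U S (phi S)).

Definition cond_ii (U S T : set V) : Prop :=
  forall n, dim_is (S `&` U) n <-> dim_is (T `&` U) n.

Definition cond_ii' (U S T : set V) : Prop :=
  forall n, quot_dim S (S `&` T) n <-> quot_dim T (S `&` T) n.

Definition E_commensurable := commens_with cond_ii.
Definition E_commensurable' := commens_with cond_ii'.

End Defs.

(* Main.v *)
Require Import Defs.
From HB Require Import structures.
From mathcomp Require Import all_boot all_order all_algebra.
From mathcomp Require Import boolp classical_sets cardinality.
Local Open Scope classical_set_scope.
Local Open Scope ring_scope.
Import GRing.Theory.

Section Helpers.
Variables (k : fieldType) (V : lmodType k).
Implicit Types (S : set V) (x y : V).

Definition catf {T : Type} {p q : nat} (x : 'I_p -> T) (y : 'I_q -> T)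
  (i : 'I_(p + q)) : T :=
  match split i with inl a => x a | inr b => y b end.

Lemma catfl {T : Type} {p q : nat} (x : 'I_p -> T) (y : 'I_q -> T) a :
  catf x y (lshift q a) = x a.
Proof. by rewrite /catf (unsplitK (inl a : 'I_p + 'I_q)). Qed.

Lemma catfr {T : Type} {p q : nat} (x : 'I_p -> T) (y : 'I_q -> T) b :
  catf x y (rshift p b) = y b.
Proof. by rewrite /catf (unsplitK (inr b : 'I_p + 'I_q)). Qed.

Lemma sum_cat {p q : nat} (F : 'I_(p + q) -> V) :
  \sum_(i < p + q) F i = \sum_(a < p) F (lshift q a) + \sum_(b < q) F (rshift p b).
Proof. by rewrite big_split_ord. Qed.

Lemma spanP m (g : 'I_m -> V) v :
  Defs.span (range g) v <-> exists d : 'I_m -> k, v = \sum_j d j *: g j.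
Proof.
split.
- move=> [n [f [c [Hf ->]]]].
  have Hf' : forall i, exists j, g j = f i by move=> i; case: (Hf i) => j _ <-; exists j.
  have [h Hh] := choice Hf'.
  exists (fun j => \sum_(i < n | h i == j) c i).
  rewrite (eq_bigr (fun i => c i *: g (h i))); last by move=> i _; rewrite (Hh i).
  under [RHS]eq_bigr => j _ do rewrite scaler_suml.
  rewrite (exchange_big_dep xpredT) //=.
  apply: eq_bigr => i _.
  by rewrite (big_pred1 (h i)) // => j; rewrite eq_sym.
- move=> [d ->]; exists m, g, d; split => // i; by exists i.
Qed.

Lemma subspace0 S : subspace S -> S 0.
Proof. by case. Qed.
Lemma subspaceD S x y : subspace S -> S x -> S y -> S (x + y).
Proof. by move=> [_ H] Hx Hy; have := H 1 x y Hx Hy; rewrite scale1r. Qed.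
Lemma subspaceZ S a x : subspace S -> S x -> S (a *: x).
Proof. by move=> [H0 H] Hx; have := H a x 0 Hx H0; rewrite addr0. Qed.
Lemma subspaceN S x : subspace S -> S x -> S (- x).
Proof. by move=> HS Hx; rewrite -scaleN1r; apply: subspaceZ. Qed.
Lemma subspaceB S x y : subspace S -> S x -> S y -> S (x - y).
Proof. by move=> HS Hx Hy; apply: subspaceD => //; apply: subspaceN. Qed.
Lemma subspace_sum S n (c : 'I_n -> k) (f : 'I_n -> V) :
  subspace S -> (forall i, S (f i)) -> S (\sum_i c i *: f i).
Proof.
move=> HS Hf; apply: (big_ind S) => //; first exact: subspace0.
  by move=> x y; apply: subspaceD.
by move=> i _; apply: subspaceZ.
Qed.

Lemma span_subspace m (g : 'I_m -> V) : subspace (Defs.span (range g)).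
Proof.
split; first by apply/spanP; exists (fun _ => 0); rewrite big1 // => i _; rewrite scale0r.
move=> a x y /spanP [d1 ->] /spanP [d2 ->]; apply/spanP.
exists (fun j => a * d1 j + d2 j).
rewrite scaler_sumr -big_split /=; apply: eq_bigr => j _.
by rewrite scalerDl scalerA.
Qed.

Lemma span_gen m (g : 'I_m -> V) j : Defs.span (range g) (g j).
Proof.
apply/spanP; exists (fun i => (i == j)%:R).
rewrite (bigD1 j) //= eqxx scale1r big1 ?addr0 // => i /negbTE ->.
by rewrite scale0r.
Qed.


Lemma indep_le (B : set V) n m (f : 'I_n -> V) (g : 'I_m -> V) :
  subspace B -> (forall i, ssum B (Defs.span (range g)) (f i)) ->
  (forall c : 'I_n -> k, B (\sum_i c i *: f i) -> forall i, c i = 0) -> (n <= m)%N.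
Proof.
move=> HB Hf Hind.
have Hf' : forall i, exists bd : V * ('I_m -> k),
    B bd.1 /\ f i = bd.1 + \sum_j bd.2 j *: g j.
  move=> i; have [b [s [Hb [Hs ->]]]] := Hf i.
  have [d ->] := (spanP _ _ _).1 Hs; by exists (b, d).
have [h Hh] := choice Hf'.
rewrite leqNgt; apply/negP => Hmn.
pose M := \matrix_(i < n, j < m) (h i).2 j.
have /eqP HK : kermx M != 0.
  rewrite kermx_eq0 -row_leq_rank -ltnNge.
  exact: leq_ltn_trans (rank_leq_col M) Hmn.
have [r Hr] : exists r, row r (kermx M) != 0.
  case: (pselect (exists r, row r (kermx M) != 0)) => // Hno; exfalso; apply: HK.
  apply/row_matrixP => r; rewrite row0; apply/eqP.
  case: (boolP (row r (kermx M) == 0)) => // Hr'; exfalso; apply: Hno; by exists r.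
set c := row r (kermx M) in Hr.
have HcM : c *m M = 0 by rewrite /c -row_mul mulmx_ker row0.
have Hsum : B (\sum_i c 0 i *: f i).
  suff -> : \sum_i c 0 i *: f i = \sum_i c 0 i *: (h i).1.
    by apply: subspace_sum => // i; case: (Hh i).
  transitivity (\sum_i c 0 i *: ((h i).1 + \sum_j (h i).2 j *: g j)).
    by apply: eq_bigr => i _; rewrite -(proj2 (Hh i)).
  rewrite (eq_bigr (fun i => c 0 i *: (h i).1 + \sum_j (c 0 i * (h i).2 j) *: g j)); last first.
    move=> i _; rewrite scalerDr scaler_sumr; congr (_ + _).
    by apply: eq_bigr => j _; rewrite scalerA.
  rewrite big_split /= exchange_big /= [X in _ + X](_ : _ = 0) ?addr0 //.
  apply: big1 => j _; rewrite -scaler_suml.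
  move: (congr1 (fun A : 'M[k]_(1, m) => A 0 j) HcM); rewrite mxE [RHS]mxE.
  under eq_bigr do rewrite [M _ _]mxE.
  by move=> ->; rewrite scale0r.
move/negP: Hr; apply; apply/eqP/rowP => i; rewrite [RHS]mxE.
exact: Hind _ Hsum i.
Qed.


Lemma qdim_uniq (A B : set V) n n' :
  subspace B -> quot_dim A B n -> quot_dim A B n' -> n = n'.
Proof.
move=> HB [_ [f [Af [If Sf]]]] [_ [f' [Af' [If' Sf']]]].
apply/eqP; rewrite eqn_leq; apply/andP; split.
- apply: (@indep_le B n n' f f' HB) => //.
  by move=> i; apply: Sf'.
- apply: (@indep_le B n' n f' f HB) => //.
  by move=> i; apply: Sf.
Qed.

Lemma qdim_ex (A B B' : set V) m (g : 'I_m -> V) :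
  subspace A -> subspace B -> subspace B' -> B `<=` A ->
  A `<=` ssum B' (Defs.span (range g)) -> (forall v, A v -> B' v -> B v) ->
  exists n, quot_dim A B n.
Proof.
move=> HA HB HB' BA Asp AB.
case: (pselect (exists n, quot_dim A B n)) => // Hno; exfalso.
pose P n := exists f : 'I_n -> V, (forall i, A (f i)) /\
  (forall c : 'I_n -> k, B (\sum_i c i *: f i) -> forall i, c i = 0).
have bound : forall n, P n -> (n <= m)%N.
  move=> n [f [Af If]]; apply: (@indep_le B' n m f g HB').
    by move=> i; apply: Asp.
  move=> c Hc; apply: If; apply: AB => //; exact: subspace_sum.
have Pall : forall n, P n.
  elim=> [|n [f [Af If]]].
    by exists (fun i : 'I_0 => 0); split => [[]|c _ []].
  have : ~ (A `<=` ssum B (Defs.span (range f))).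
    by move=> Hsub; apply: Hno; exists n; split => //; exists f.
  move=> /existsNP [a /not_implyP [Aa Na]].
  rewrite -addn1; exists (catf f (fun _ : 'I_1 => a)); split.
    by move=> i; rewrite /catf; case: (split i).
  move=> c; rewrite sum_cat.
  under eq_bigr do rewrite catfl.
  under [X in _ + X]eq_bigr do rewrite catfr.
  rewrite big_ord1; set c1 := c (rshift n ord0); set s := \sum_(i < n) _.
  move=> Hc.
  have Hc1 : c1 = 0.
    case: (eqVneq c1 0) => // Hc1; exfalso; apply: Na.
    exists (c1^-1 *: (s + c1 *: a)), (- (c1^-1 *: s)); split.
      exact: subspaceZ.
    split.
      apply/spanP; exists (fun i => - (c1^-1 * c (lshift 1 i))).
      rewrite /s scaler_sumr -sumrN; apply: eq_bigr => i _.
      by rewrite scalerA scaleNr.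
    by rewrite scalerDr scalerA mulVf // scale1r addrC addrA addNr add0r.
  rewrite Hc1 scale0r addr0 in Hc.
  move=> i; rewrite -(splitK i); case: (split i) => j /=.
    exact: If _ Hc j.
  have -> : j = ord0 by apply: val_inj; case: j => [[]].
  exact: Hc1.
have := bound _ (Pall m.+1); by rewrite ltnn.
Qed.


Lemma dim_sum (S T : set V) m (g : 'I_m -> V) p q :
  subspace S -> subspace T -> T `<=` ssum S (Defs.span (range g)) ->
  dim_is (S `&` Defs.span (range g)) p -> quot_dim T (S `&` T) q ->
  dim_is (Defs.span (range g) `&` ssum S T) (p + q).
Proof.
move=> HS HT TSU [_ [x [Hx [Ix Sx]]]] [_ [t [Ht [It St]]]].
have HU := @span_subspace _ g.
set U := Defs.span (range g) in TSU Hx Sx HU *.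
have Hu : forall j, exists su : V * V, S su.1 /\ U su.2 /\ t j = su.1 + su.2.
  by move=> j; have [s [u [Hs [Hu ->]]]] := TSU _ (Ht j); exists (s, u).
have [h Hh] := choice Hu.
pose u j := (h j).2.
have tsplit : forall b : 'I_q -> k,
    \sum_j b j *: t j = \sum_j b j *: (h j).1 + \sum_j b j *: u j.
  move=> b; rewrite -big_split /=; apply: eq_bigr => j _.
  by case: (Hh j) => _ [_ ->]; rewrite scalerDr.
have Us : forall b : 'I_q -> k, U (\sum_j b j *: u j).
  by move=> b; apply: subspace_sum => // j; case: (Hh j) => _ [].
have Ss : forall b : 'I_q -> k, S (\sum_j b j *: (h j).1).
  by move=> b; apply: subspace_sum => // j; case: (Hh j).
split.
  move=> v ->; split; first exact: subspace0.
  by exists 0, 0; rewrite addr0; split; [exact: subspace0|split; [exact: subspace0|]].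
exists (catf x u); split; [|split].
- move=> i; rewrite /catf; case: (split i) => j.
    have [Sxj Uxj] := Hx j; split => //; exists (x j), 0.
    by split => //; split; [exact: subspace0 | rewrite addr0].
  have [Hs [Hu' Ht']] := Hh j; split => //.
  exists (- (h j).1), (t j); split; first exact: subspaceN.
  by split; [exact: Ht | rewrite Ht' addKr].
- move=> c; rewrite sum_cat.
  under eq_bigr do rewrite catfl.
  under [X in _ + X]eq_bigr do rewrite catfr.
  set a := fun i => c (lshift q i); set b := fun j => c (rshift p j).
  move=> /= H0.
  have Hsu : \sum_j b j *: u j = - \sum_i a i *: x i.
    by apply/eqP; rewrite -addr_eq0 addrC H0.
  have Hb : forall j, b j = 0.
    apply: It; split; last by apply: subspace_sum.
    rewrite tsplit Hsu; apply: subspaceB => //.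
    by apply: subspace_sum => // i; case: (Hx i).
  have Ha : forall i, a i = 0.
    apply: Ix; move: H0; rewrite [X in _ + X]big1 ?addr0 //.
    by move=> j _; move: (Hb j); rewrite /b => ->; rewrite scale0r.
  move=> i; rewrite -(splitK i); case: (split i) => j /=.
    exact: Ha.
  exact: Hb.
- move=> w [Uw [s0 [t0 [Ss0 [Tt0 Hw]]]]].
  have [c0 [y [[Sc0 Tc0] [Hy Ht0]]]] := St _ Tt0.
  have [b Hyb] := (spanP _ _ _).1 Hy.
  set z := s0 + c0 + \sum_j b j *: (h j).1.
  have wz : w = z + \sum_j b j *: u j.
    by rewrite Hw Ht0 Hyb tsplit /z !addrA.
  have Sz : S z by apply: subspaceD => //; apply: subspaceD.
  have Uz : U z.
    have := @subspaceB U w _ HU Uw (Us b); by rewrite wz addrK.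
  have [z0 [z' [Hz0 [Hz' Hzz]]]] := Sx _ (conj Sz Uz).
  have [a Hza] := (spanP _ _ _).1 Hz'.
  exists 0, w; split => //; split; last by rewrite add0r.
  apply/spanP; exists (catf a b); rewrite sum_cat.
  under eq_bigr do rewrite !catfl.
  under [X in _ + X]eq_bigr do rewrite !catfr.
  by rewrite wz Hzz Hz0 add0r Hza.
Qed.


Lemma subspace_set0 : subspace [set (0 : V)].
Proof. by split => // a x y -> ->; rewrite scaler0 addr0. Qed.

Lemma subspaceI (A B : set V) : subspace A -> subspace B -> subspace (A `&` B).
Proof.
move=> HA HB; split; first by split; apply: subspace0.
by move=> a x y [Ax Bx] [Ay By]; split; [case: HA => _; apply|case: HB => _; apply].
Qed.

Lemma ssumC (A B : set V) : ssum A B = ssum B A.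
Proof.
apply/seteqP; split => v [a [b [Ha [Hb ->]]]]; exists b, a; by rewrite addrC.
Qed.

Lemma fin_dim_sub (U : set V) : fin_dim U -> subspace U.
Proof. by move=> [m [g ->]]; apply: span_subspace. Qed.

Lemma iff_dims (P Q : nat -> Prop) p p' : P p -> Q p' ->
  (forall n n', P n -> P n' -> n = n') -> (forall n n', Q n -> Q n' -> n = n') ->
  ((forall n, P n <-> Q n) <-> p = p').
Proof.
move=> Pp Qp' uP uQ; split.
  by move=> H; apply: uQ Qp'; apply/H.
move=> E n; rewrite -E in Qp'; split => H.
  by rewrite (uP _ _ H Pp).
by rewrite (uQ _ _ H Qp').
Qed.

Lemma condK (S T U : set V) : subspace S -> subspace T -> fin_dim U ->
  S `<=` ssum T U -> T `<=` ssum S U -> (cond_ii U S T <-> cond_ii' U S T).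
Proof.
move=> HS HT [m [g HUe]] STU TSU; subst U.
have HU := @span_subspace _ g.
set U := Defs.span (range g) in STU TSU HU *.
have H0 := subspace_set0.
have dimex : forall X, subspace X -> exists p, dim_is (X `&` U) p.
  move=> X HX; apply: (@qdim_ex _ _ [set 0] m g) => //.
  - exact: subspaceI.
  - by move=> v ->; split; apply: subspace0.
  - by move=> v [_ Uv]; exists 0, v; rewrite add0r.
have [p Hp] := dimex S HS.
have [p' Hp'] := dimex T HT.
have [q Hq] : exists q, quot_dim S (S `&` T) q.
  apply: (@qdim_ex _ _ T m g) => //; try exact: subspaceI;
    try (by move=> v []); try (by move=> v ? ?; split).
have [q' Hq'] : exists q', quot_dim T (S `&` T) q'.
  apply: (@qdim_ex _ _ S m g) => //; try exact: subspaceI;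
    try (by move=> v []); try (by move=> v ? ?; split).
have D1 := @dim_sum S T m g p q' HS HT TSU Hp Hq'.
have D2 : dim_is (U `&` ssum T S) (p' + q).
  apply: dim_sum => //; by rewrite setIC.
rewrite ssumC in D2.
have E := @qdim_uniq _ _ _ _ H0 D1 D2.
rewrite /cond_ii /cond_ii'.
rewrite (@iff_dims _ _ _ _ Hp Hp'); try by move=> ? ?; apply: qdim_uniq.
rewrite (@iff_dims _ _ _ _ Hq Hq'); try by move=> ? ?; apply: qdim_uniq; apply: subspaceI.
split => [Epp|Eqq].
  by move: E; rewrite Epp => /addnI.
by move: E; rewrite Eqq addnC [(p' + _)%N]addnC => /addnI.
Qed.

Lemma ssum_span m1 m2 (g1 : 'I_m1 -> V) (g2 : 'I_m2 -> V) :
  ssum (Defs.span (range g1)) (Defs.span (range g2)) = Defs.span (range (catf g1 g2)).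
Proof.
apply/seteqP; split.
  move=> v [a [b [/spanP [d1 ->] [/spanP [d2 ->] ->]]]].
  apply/spanP; exists (catf d1 d2); rewrite sum_cat.
  by congr (_ + _); apply: eq_bigr => i _; rewrite ?catfl ?catfr.
move=> v /spanP [d ->]; rewrite sum_cat.
under eq_bigr do rewrite !catfl.
under [X in _ + X]eq_bigr do rewrite !catfr.
eexists; eexists; split; last split; last reflexivity.
  by apply/spanP; eexists.
by apply/spanP; eexists.
Qed.

Lemma ssum_mono (S T U1 U : set V) : U1 `<=` U -> S `<=` ssum T U1 -> S `<=` ssum T U.
Proof. by move=> HU HS v /HS [a [b [Ha [Hb ->]]]]; exists a, b; split => //; split => //; apply: HU. Qed.

Lemma ssum_trans (S T R U1 U2 : set V) : S `<=` ssum T U1 -> T `<=` ssum R U2 ->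
  S `<=` ssum R (ssum U1 U2).
Proof.
move=> HS HT v /HS [t [u1 [/HT [r [u2 [Hr [Hu2 ->]]]] [Hu1 ->]]]].
exists r, (u1 + u2); split => //; split; first by exists u1, u2.
by rewrite -addrA [u2 + u1]addrC.
Qed.

End Helpers.
Arguments ssum_trans {k V S T R U1 U2}.
Arguments ssum_mono {k V S T U1 U}.

Theorem mainTheorem6 (k : fieldType) (V : lmodType k) (E : set V) :
  [pchar k] =i pred0 ->
  is_basis E -> countable E -> infinite_set E ->
  ((forall F, weakly_compatible E F -> E_commensurable E F F) /\
   (forall F G, E_commensurable E F G -> E_commensurable E G F) /\
   (forall F G H, E_commensurable E F G -> E_commensurable E G H ->
      E_commensurable E F H)) /\
  (forall F G, E_commensurable E F G <-> E_commensurable' E F G).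
Proof.
move=> _ _ _ _.
have sub : forall F S, weakly_compatible E F -> F S -> subspace S.
  by move=> F S [[[Hc _] _] _] FS; apply: Hc.
have cmp : forall F S T, weakly_compatible E F -> F S -> F T -> S `<=` T \/ T `<=` S.
  by move=> F S T [[[_ Hc] _] _]; apply: Hc.
have Kequiv : forall F G, E_commensurable E F G <-> E_commensurable' E F G.
  move=> F G; split.
  - move=> [wF [wG [phi [U [h1 [h2 [h3 [h4 [fU h5]]]]]]]]].
    split => //; split => //; exists phi, U; do 5 (split => //).
    move=> S FS; have [a [b c]] := h5 S FS; do 2 (split => //).
    apply/(@condK k V S (phi S) U) => //; first exact: (sub F).
    by apply: (sub G) => //; apply: h1.
  - move=> [wF [wG [phi [U [h1 [h2 [h3 [h4 [fU h5]]]]]]]]].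
    split => //; split => //; exists phi, U; do 5 (split => //).
    move=> S FS; have [a [b c]] := h5 S FS; do 2 (split => //).
    apply/(@condK k V S (phi S) U) => //; first exact: (sub F).
    by apply: (sub G) => //; apply: h1.
split; last exact: Kequiv.
split; [|split].
- move=> F wF; split => //; split => //; exists id, [set 0].
  split; first by move=> S.
  split; first by move=> S T _ _.
  split; first by move=> T FT; exists T.
  split; first by move=> S T _ _.
  split.
    exists 0%N, (fun _ : 'I_0 => 0); apply/seteqP; split => v.
      by move=> ->; apply: subspace0; apply: span_subspace.
    by move=> /spanP [d ->]; rewrite big_ord0.
  move=> S FS; split; [|split]; try (by move=> v Sv; exists v, 0; rewrite addr0).
  by move=> n.
- move=> F G [wF [wG [phi [U [h1 [h2 [h3 [h4 [fU h5]]]]]]]]].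
  have [psi Hpsi] : exists psi : set V -> set V,
      forall T, G T -> F (psi T) /\ phi (psi T) = T.
    have : forall T, exists S, G T -> F S /\ phi S = T.
      move=> T; case: (pselect (G T)) => GT.
        by have [S [FS <-]] := h3 T GT; exists S.
      by exists T.
    by move=> /choice [psi Hpsi]; exists psi.
  split => //; split => //; exists psi, U.
  split; first by move=> T GT; case: (Hpsi T GT).
  split.
    move=> T1 T2 G1 G2 E12.
    by rewrite -(proj2 (Hpsi T1 G1)) -(proj2 (Hpsi T2 G2)) E12.
  split.
    move=> S FS; exists (phi S); split; first exact: h1.
    have [F1 P1] := Hpsi _ (h1 _ FS).
    by apply: h2 => //.
  split.
    move=> T1 T2 G1 G2 T12; have [F1 P1] := Hpsi T1 G1; have [F2 P2] := Hpsi T2 G2.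
    case: (cmp F _ _ wF F1 F2) => // H21.
    have T21 : T2 `<=` T1 by rewrite -P1 -P2; apply: h4.
    have ET : T1 = T2 by apply/seteqP.
    by rewrite ET => v.
  split => //.
  move=> T GT; have [FS PS] := Hpsi T GT; have [a [b c]] := h5 _ FS.
  rewrite PS in a b c.
  split => //; split => //.
  by move=> n; apply: iff_sym; apply: c.
- move=> F G H [wF [wG [phi1 [U1 [a1 [a2 [a3 [a4 [fU1 a5]]]]]]]]]
    [_ [wH [phi2 [U2 [b1 [b2 [b3 [b4 [fU2 b5]]]]]]]]].
  split => //; split => //; exists (phi2 \o phi1), (ssum U1 U2).
  have HU1 := @fin_dim_sub k V U1 fU1.
  have HU2 := @fin_dim_sub k V U2 fU2.
  have U1s : U1 `<=` ssum U1 U2.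
    by move=> v Hv; exists v, 0; rewrite addr0; split => //; split => //; apply: subspace0.
  have U2s : U2 `<=` ssum U1 U2.
    by move=> v Hv; exists 0, v; rewrite add0r; split => //; apply: subspace0.
  have fU : fin_dim (ssum U1 U2).
    case: fU1 => m1 [g1 ->]; case: fU2 => m2 [g2 ->].
    by exists (m1 + m2)%N, (catf g1 g2); apply: ssum_span.
  split; first by move=> S FS; apply: b1; apply: a1.
  split.
    by move=> S T FS FT /= E12; apply: a2 => //; apply: b2 => //; apply: a1.
  split.
    move=> R HR; have [T [GT <-]] := b3 R HR; have [S [FS <-]] := a3 T GT.
    by exists S.
  split.
    by move=> S T FS FT ST; apply: b4; try apply: a1; try apply: a4.
  split => //.
  move=> S FS /=; have GT : G (phi1 S) := a1 S FS.
  have [c1 [c2 c3]] := a5 S FS; have [d1 [d2 d3]] := b5 _ GT.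
  have HS := sub F S wF FS.
  have HT := sub G _ wG GT.
  have HR := sub H _ wH (b1 _ GT).
  split; first exact: (ssum_trans c1 d1).
  split.
    rewrite [ssum U1 U2]ssumC; exact: (ssum_trans d2 c2).
  have e1 : cond_ii (ssum U1 U2) S (phi1 S).
    apply/(@condK k V S (phi1 S) (ssum U1 U2) HS HT fU).
        exact: (ssum_mono U1s c1).
      exact: (ssum_mono U1s c2).
    exact: (proj1 (@condK k V S (phi1 S) U1 HS HT fU1 c1 c2) c3).
  have e2 : cond_ii (ssum U1 U2) (phi1 S) (phi2 (phi1 S)).
    apply/(@condK k V _ _ (ssum U1 U2) HT HR fU).
        exact: (ssum_mono U2s d1).
      exact: (ssum_mono U2s d2).
    exact: (proj1 (@condK k V _ _ U2 HT HR fU2 d1 d2) d3).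
  by move=> n; apply: (iff_trans (e1 n) (e2 n)).
Qed.
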